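(* Let $\mathcal S$ be a Stone pseudovariety and $S$ a Stone topological algebra which is residually $\mathcal S$. If $K$ is a clopen subset of $S$, then there exist $T\in\mathcal S$ and a continuous homomorphism $\varphi:S\to T$ such that $\varphi^{-1}(\varphi(K))=K$.
   Context: All algebras are topological $\Omega$-algebras over a fixed topological signature $\Omega=\biguplus_n\Omega_n$ (continuous evaluation maps $\Omega_n\times A^n\to A$). A Stone topological algebra is one whose space is compact Hausdorff and 0-dimensional. A Stone pseudovariety is a nonempty class of Stone topological algebras closed under images by onto continuous homomorphisms that are Stone topological algebras, closed subalgebras, and finite direct products. $S$ is residually $\mathcal S$ if any two distinct elements of $S$ are separated by a continuous homomorphism into a member of $\mathcal S$. *)

(* Defs.v *)
From HB Require Import structures.
From mathcomp Require Import all_boot all_order all_algebra.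
From mathcomp Require Import all_classical all_reals all_analysis.
Set Implicit Arguments. Unset Strict Implicit. Unset Printing Implicit Defensive.
Local Open Scope classical_set_scope.

(* A topological signature: Omega = disjoint union of the Omega_n, each a
   topological space.  We represent it by the family [Om : nat -> topologicalType]. *)

Record alg (Om : nat -> topologicalType) := Alg {
  carrier :> topologicalType;
  op : forall n, Om n -> ('I_n -> carrier) -> carrier }.

Definition top_alg Om (A : alg Om) : Prop :=
  forall n, continuous (fun p : Om n * {ptws 'I_n -> A} => @op Om A n p.1 p.2).

Definition zero_dim (T : topologicalType) : Prop :=
  forall (x : T) (U : set T), open U -> U x ->
    exists V : set T, [/\ clopen V, V x & V `<=` U].

Definition stone Om (A : alg Om) : Prop :=
  [/\ top_alg A, compact [set: A], hausdorff_space A & zero_dim A].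

Definition is_hom Om (A B : alg Om) (f : A -> B) : Prop :=
  forall n (w : Om n) (a : 'I_n -> A), f (@op Om A n w a) = @op Om B n w (f \o a).

Definition cont_hom Om (A B : alg Om) (f : A -> B) : Prop :=
  is_hom f /\ continuous f.

Definition subalg_closed Om (A : alg Om) (B : set A) : Prop :=
  forall n (w : Om n) (a : 'I_n -> A), (forall i, B (a i)) -> B (@op Om A n w a).

Definition sub_alg Om (A : alg Om) (B : set A) (HB : subalg_closed B) : alg Om :=
  @Alg Om (set_type B)
    (fun n w a => exist _ (@op Om A n w (fun i => set_val (a i)))
       (mem_set (HB n w _ (fun i => set_valP (a i))))).

Definition prod_alg Om (I : finType) (A : I -> alg Om) : alg Om :=
  @Alg Om (prod_topology (fun i => carrier (A i)))
    (fun n w a => (fun i => @op Om (A i) n w (fun k => a k i)) : forall i, A i).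

Definition stone_pseudovariety Om (V : alg Om -> Prop) : Prop :=
  [/\ (forall A, V A -> stone A),
      (exists A, V A),
      (forall (A B : alg Om) (f : A -> B),
          V A -> stone B -> cont_hom f -> (forall y : B, exists x : A, f x = y) -> V B),
      (forall (A : alg Om) (B : set A) (HB : subalg_closed B),
          V A -> closed B -> V (sub_alg HB))
    & (forall (I : finType) (A : I -> alg Om),
          (forall i, V (A i)) -> V (prod_alg A))].

Definition residually Om (V : alg Om -> Prop) (S : alg Om) : Prop :=
  forall x y : S, x <> y ->
    exists (T : alg Om) (f : S -> T), [/\ V T, cont_hom f & f x <> f y].

(* Main.v *)
From HB Require Import structures.
Require Import Defs.
From mathcomp Require Import all_boot all_order all_algebra.
From mathcomp Require Import all_classical all_reals all_analysis.
From mathcomp Require Import finmap.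
Local Open Scope classical_set_scope.
Definition pt_of {T : topologicalType} (x : T) : Type := T.
HB.instance Definition _ (T : topologicalType) (x : T) := Topological.copy (pt_of x) T.
HB.instance Definition _ (T : topologicalType) (x : T) := isPointed.Build (pt_of x) x.

Lemma compact_cover_np (T : topologicalType) (A : set T) : compact A -> cover_compact A.
Proof.
case: (pselect (exists x, A x)) => [[x _]|nA] cA.
  have := @compact_cover (pt_of x); move=> e.
  have : @compact (pt_of x) A by exact: cA.
  by rewrite e.
move=> I D f _ cov; exists fset0%fset => // z Az; case: nA; by exists z.
Qed.

Lemma prod_cont (I : choiceType) (T : topologicalType) (U_ : I -> topologicalType)
  (f_ : forall i, T -> U_ i) : (forall i, continuous (f_ i)) ->
  continuous ((fun x i => f_ i x) : T -> prod_topology U_).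
Proof.
move=> ctsf x; apply/cvg_sup.
move=> i; move: x; apply/(@continuousP _ (initial_topology (@^~ i))) => A [B oB E].
rewrite -E.
have -> : (fun x i => f_ i x) @^-1` ((@^~ i) @^-1` B) = f_ i @^-1` B by [].
by apply: open_comp => // + _; apply: ctsf.
Qed.

Set Implicit Arguments.
Record pkg Om (V : alg Om -> Prop) (S : alg Om) := Pkg {
  pT : alg Om; pf : S -> pT; pV : V pT; pc : cont_hom pf }.

#[global] Lemma combine Om (V : alg Om -> Prop) (S : alg Om) (I : finType) (F : I -> pkg V S) :
  stone_pseudovariety V ->
  exists p : pkg V S, forall z w, pf p z = pf p w -> forall i, pf (F i) z = pf (F i) w.
Proof.
case=> _ _ _ _ Vprod.
pose A := fun i => pT (F i).
pose phi := (fun z i => pf (F i) z) : S -> prod_alg A.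
have hc : cont_hom phi.
  split.
    move=> n w a; apply: functional_extensionality_dep => i /=.
    by case: (pc (F i)) => + _; apply.
  by apply: (@prod_cont I S (fun i => carrier (A i))) => i; case: (pc (F i)).
exists (@Pkg Om V S _ phi (Vprod _ A (fun i => pV (F i))) hc) => z w /= e i.
by have := congr1 (fun h => h i) e.
Qed.

Lemma pkg_hausdorff Om (V : alg Om -> Prop) (S : alg Om) (p : pkg V S) :
  stone_pseudovariety V -> hausdorff_space (pT p).
Proof. by case=> Vs _ _ _ _; case: (Vs _ (pV p)). Qed.

Lemma pkg_cont Om (V : alg Om -> Prop) (S : alg Om) (p : pkg V S) : continuous (pf p).
Proof. by case: (pc p). Qed.

Lemma step1 Om (V : alg Om -> Prop) (S : alg Om) (K : set S) (y : S) :
  stone_pseudovariety V -> stone S -> residually V S -> clopen K -> ~ K y ->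
  exists p : pkg V S, forall z, K z -> pf p z <> pf p y.
Proof.
move=> sV [_ cS _ _] res [_ clK] nKy.
have [p0 _] := @combine Om V S void (fun v => match v with end) sV.
have : forall x, exists p : pkg V S, x <> y -> pf p x <> pf p y.
  move=> x; case: (pselect (x = y)) => [->|xy]; first by exists p0.
  have [T [f [VT [hf cf] fxy]]] := res x y xy.
  by exists (@Pkg Om V S T f VT (conj hf cf)).
case/choice => g hg.
have cK : compact K by apply: (subclosed_compact clK cS).
have {}cK := @compact_cover_np _ _ cK.
have [D' sD cov] : finite_subset_cover K (fun x => pf (g x) @^-1` ~` [set pf (g x) y]) K.
  apply: cK.
- move=> x _; apply: open_comp => [z _|]; first exact: pkg_cont.
  apply: closed_openC; apply: accessible_closed_set1.
  exact/hausdorff_accessible/pkg_hausdorff.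
- move=> x Kx; exists x => //; apply: hg => exy; apply: nKy; by rewrite -exy.
have [p hp] := @combine Om V S (fset_sub_type D') (fun i => g (val i)) sV.
exists p => z Kz e.
have [x xD /= hx] := cov z Kz.
apply: hx; have := hp z y e (FSetSub xD); exact.
Qed.

Unset Implicit Arguments.
Theorem lemma4p9 (Om : nat -> topologicalType) (V : alg Om -> Prop) (S : alg Om)
  (K : set S) :
  stone_pseudovariety V -> stone S -> residually V S -> clopen K ->
  exists (T : alg Om) (phi : S -> T),
    [/\ V T, cont_hom phi & phi @^-1` (phi @` K) = K].
Proof.
move=> sV stS res clK.
have := stS => -[_ cS _ _].
have : forall y, exists p : pkg V S, ~ K y -> forall z, K z -> pf p z <> pf p y.
  move=> y; case: (pselect (K y)) => Ky.
    have [p0 _] := @combine Om V S void (fun v => match v with end) sV.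
    by exists p0.
  by have [p hp] := @step1 _ _ _ K y sV stS res clK Ky; exists p.
case/choice => g hg.
have cK : compact (~` K).
  apply: (subclosed_compact _ cS) => //.
  by case: clK => oK _; rewrite closedC.
have {}cK := @compact_cover_np _ _ cK.
have [D' sD cov] : finite_subset_cover (~` K) (fun y => pf (g y) @^-1` ~` (pf (g y) @` K)) (~` K).
  apply: cK.
- move=> y _; apply: open_comp => [z _|]; first exact: pkg_cont.
  apply: closed_openC; apply: compact_closed; first exact: pkg_hausdorff.
  apply: continuous_compact; first exact/continuous_subspaceT/pkg_cont.
  apply: (subclosed_compact _ cS) => //; by case: clK.
- move=> y nKy; exists y => //= -[k Kk e].
  exact: (hg y nKy k Kk e).
have [p hp] := @combine Om V S (fset_sub_type D') (fun i => g (val i)) sV.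
exists (pT p), (pf p); split; [exact: pV | exact: pc |].
apply/seteqP; split => z; last by move=> Kz; exists z.
move=> [k Kk e]; apply: contrapT => nKz.
have [y yD /= hy] := cov z nKz.
apply: hy; exists k => //.
by have := hp k z e (FSetSub yD).
Qed.
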